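(* Let $C=(C_1,\dots,C_L)$ be a random vector whose components $C_i$ are discrete (finite-valued) and mutually independent, with prior $p(C)=\prod_{i=1}^L p(C_i)$, so that $\mathbb{I}(C;\hat X)$ is bounded from above by $\mathbb{H}(C)$. Let $Z'$ be a noise vector independent of $C$, let $\mathcal{G}$ be a generator, and let $\hat X=\mathcal{G}(Z',C)$ be the generated image. Let $Q(C\mid \hat X)$ be an auxiliary (approximate posterior) conditional distribution of mean-field form, $Q(C\mid\hat X)=\prod_{i=1}^L Q(C_i\mid \hat X)$. Define $$L_{\text{info}}(\mathcal{G},Q)=\mathbb{E}_{C\sim p(C),\,\hat X\sim \mathcal{G}(Z',C)}\big[\log Q(C\mid\hat X)-\log p(C)\big].$$ Then, when $L_{\text{info}}(\mathcal{G},Q)\to \mathbb{I}(C;\hat X)$, the conditional total correlation satisfies $\mathbb{TC}(C\mid\hat X)\to 0$ almost everywhere in $\hat X$.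
   Context: Here $\hat X\sim\mathcal{G}(Z',C)$ denotes sampling from the conditional distribution $p(\hat X\mid C)$ induced by the generator (with randomness from $Z'$ and any internal noise). $\mathbb{I}$ denotes mutual information and $\mathbb{H}$ entropy. For a realization $\hat x$ of $\hat X$, the total correlation of $C$ given $\hat X=\hat x$ is $$\mathbb{TC}(C\mid\hat X=\hat x)=D_{KL}\Big(p(C\mid\hat X=\hat x)\,\Big\|\,\prod_{i=1}^L p(C_i\mid \hat X=\hat x)\Big),$$ where $p(C\mid\hat X)$ is the true posterior and $D_{KL}$ is the Kullback–Leibler divergence. *)

(* Defs.v *)
From HB Require Import structures.
From mathcomp Require Import all_boot all_algebra.
From mathcomp Require Import all_classical all_reals all_analysis.
Set Implicit Arguments. Unset Strict Implicit. Unset Printing Implicit Defensive.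
Import GRing.Theory Num.Theory.
Local Open Scope ring_scope.

Section InfoDefs.
Variables (R : realType) (L : nat) (T : 'I_L -> finType).

Definition config := {dffun forall i : 'I_L, T i}.

Definition is_pmf (U : finType) (f : U -> R) :=
  (forall u, 0 <= f u) /\ \sum_(u : U) f u = 1.

Definition joint (p : forall i, T i -> R) (c : config) : R :=
  \prod_(i < L) p i (c i).

Variables (d : measure_display) (X : measurableType d).

(* g c x : density (w.r.t. a reference measure mu) of the conditional law
   p(Xhat | C = c) induced by the generator (randomness from Z'). *)

Definition marg (p : forall i, T i -> R) (g : config -> X -> R) (x : X) : R :=
  \sum_(c : config) joint p c * g c x.

Definition post p g (c : config) (x : X) : R :=
  joint p c * g c x / marg p g x.

Definition post_i p g (i : 'I_L) (a : T i) (x : X) : R :=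
  \sum_(c : config | c i == a) post p g c x.

(* conditional total correlation TC(C | Xhat = x)
   = KL( p(C|x) || prod_i p(C_i|x) ), with the convention 0 log 0 = 0 *)
Definition TC p g (x : X) : R :=
  \sum_(c : config)
     post p g c x * ln (post p g c x / \prod_(i < L) post_i p g (c i) x).

Definition MI p (mu : {measure set X -> \bar R}) g : \bar R :=
  (\sum_(c : config)
     (joint p c)%:E * \int[mu]_x (g c x * ln (post p g c x / joint p c))%:E)%E.

Definition elog (r : R) : \bar R := if 0 < r then (ln r)%:E else -oo%E.

Definition Qjoint (Q : forall i : 'I_L, X -> T i -> R) (c : config) (x : X) : R :=
  \prod_(i < L) Q i x (c i).

Definition Linfo p (mu : {measure set X -> \bar R}) g Q : \bar R :=
  (\sum_(c : config)
     (joint p c)%:E *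
       \int[mu]_x ((g c x)%:E * (elog (Qjoint Q c x) - (ln (joint p c))%:E)))%E.

Definition ExpTC p (mu : {measure set X -> \bar R}) g : \bar R :=
  (\int[mu]_x (marg p g x * TC p g x)%:E)%E.

End InfoDefs.

(* Main.v *)
Require Import Defs.
From HB Require Import structures.
From mathcomp Require Import all_boot all_algebra.
Import order.Order.TTheory.
From mathcomp Require Import all_classical all_reals all_analysis.
From mathcomp Require Import measurable_realfun.
From mathcomp Require Import ring lra.
Import GRing.Theory Num.Theory.
Local Open Scope classical_set_scope.
Local Open Scope ring_scope.

Lemma sum_dffun_prod (R : comNzSemiRingType) (I : finType) (T : I -> finType)
  (F : forall i, T i -> R) :
  \sum_(c : {dffun forall i : I, T i}) \prod_i F i (c i) =
  \prod_i \sum_(a : T i) F i a.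
Proof.
pose G (i : I) (j : {i : I & T i}) := F (tag j) (tagged j).
have inner i : \sum_(a : T i) F i a = \sum_(j | tagged_with T i j) G i j.
  rewrite /G.
  transitivity (\sum_(k | k == i) \sum_(a : T k) F k a); first by rewrite big_pred1_eq.
  rewrite (sig_big_dep (fun k => k == i) (fun k (a : T k) => true) (fun k (a : T k) => F k a)).
  by apply: eq_bigl => j; rewrite andbT.
rewrite (eq_bigr _ (fun i _ => inner i)).
rewrite (bigA_distr_big_dep (fun i => tagged_with T i) G).
rewrite [RHS]big_sub.
pose h (c : {dffun forall i : I, T i}) := to_family_tagged_with (fprod_of_dffun c).
have hb : bijective h.
  exists (fun x => dffun_of_fprod (of_family_tagged_with x)) => x; rewrite /h.
    by rewrite to_family_tagged_withK fprod_of_dffunK.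
  by rewrite dffun_of_fprodK of_family_tagged_withK.
rewrite [RHS](reindex h); last by apply: onW_bij.
apply: eq_bigr => c _; apply: eq_bigr => i _.
by rewrite /G /h /= ffunE.
Qed.

Lemma ln_le_sub1 (R : realType) (y : R) : 0 < y -> ln y <= y - 1.
Proof.
move=> y0; have h : -1 < y - 1 by lra.
by have := le_ln1Dx h; rewrite addrC subrK.
Qed.

Lemma gibbs_term (R : realType) (a b : R) : 0 <= a -> 0 <= b -> (0 < a -> 0 < b) ->
  a - b <= a * (ln a - ln b).
Proof.
move=> a0 b0 ab; have [->|an0] := eqVneq a 0; first by rewrite mul0r; lra.
have ap : 0 < a by rewrite lt_neqAle eq_sym an0.
have bp := ab ap.
have h := @ln_le_sub1 R (b / a) (divr_gt0 bp ap).
rewrite ln_div ?posrE // in h.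
have : a * (ln b - ln a) <= a * (b / a - 1) by rewrite ler_wpM2l // ltW.
have e : a * (b / a - 1) = b - a by field; rewrite gt_eqF.
rewrite e => h2; rewrite mulrBr; rewrite mulrBr in h2; lra.
Qed.

Lemma ln_prod (R : realType) (I : finType) (f : I -> R) : (forall i, 0 < f i) ->
  ln (\prod_i f i) = \sum_i ln (f i).
Proof.
move=> f0.
suff : 0 < \prod_i f i /\ ln (\prod_i f i) = \sum_i ln (f i) by case.
apply: (big_ind2 (fun x y => 0 < x /\ ln x = y)).
- by rewrite ln1.
- move=> x1 x2 y1 y2 [h1 e1] [h2 e2]; split; first exact: mulr_gt0.
  by rewrite lnM ?posrE // e1 e2.
- by move=> i _; split.
Qed.

Section RealPart.
Variables (R : realType) (L : nat) (T : 'I_L -> finType).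
Variables (P : config T -> R) (P0 : forall c, 0 <= P c) (P1 : \sum_c P c = 1).

Definition Pm i (a : T i) := \sum_(c : config T | c i == a) P c.

Lemma Pm_ge0 i a : 0 <= Pm i a.
Proof. by apply: sumr_ge0 => c _. Qed.

Lemma Pm_ge c i : P c <= Pm i (c i).
Proof.
rewrite /Pm (bigD1 c) //= lerDl; apply: sumr_ge0 => ? _; exact: P0.
Qed.

Lemma sum_Pm_f i (f : T i -> R) : \sum_c P c * f (c i) = \sum_a Pm i a * f a.
Proof.
rewrite (partition_big (fun c : config T => c i) predT) //.
apply: eq_bigr => a _; rewrite /Pm mulr_suml; apply: eq_bigr => c /eqP -> //.
Qed.

Lemma sum_Pm i : \sum_a Pm i a = 1.
Proof.
rewrite -P1; have := sum_Pm_f i (fun _ => 1).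
by under eq_bigr do rewrite mulr1; under [in RHS]eq_bigr do rewrite mulr1; move=> ->.
Qed.

Lemma Pm_pos i a : 0 < Pm i a -> exists c : config T, c i = a /\ 0 < P c.
Proof.
move=> h; case: (pselect (exists c : config T, c i = a /\ 0 < P c)) => // hn.
move: h; rewrite /Pm big1 ?ltxx //.
move=> c /eqP ci; have := P0 c; rewrite le_eqVlt => /orP[/eqP <-//|pc].
by exfalso; apply: hn; exists c.
Qed.

Lemma prod_Pm_pos c : 0 < P c -> 0 < \prod_i Pm i (c i).
Proof. by move=> pc; apply: prodr_gt0 => i _; exact: lt_le_trans pc (Pm_ge c i). Qed.

Lemma TC_ge0_gen : 0 <= \sum_c P c * ln (P c / \prod_i Pm i (c i)).
Proof.
have r0 c : 0 <= \prod_i Pm i (c i) by apply: prodr_ge0 => i _; exact: Pm_ge0.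
have h c : P c - \prod_i Pm i (c i) <= P c * ln (P c / \prod_i Pm i (c i)).
  have [->|pn] := eqVneq (P c) 0; first by rewrite mul0r sub0r oppr_le0.
  have pc : 0 < P c by rewrite lt_neqAle eq_sym pn P0.
  rewrite ln_div ?posrE //; last exact: prod_Pm_pos.
  by apply: gibbs_term => // _; exact: prod_Pm_pos.
apply: le_trans (ler_sum _ (fun c _ => h c)).
rewrite sumrB P1 (@sum_dffun_prod _ _ _ (fun i a => Pm i a)).
by rewrite big1 ?subrr // => i _; exact: sum_Pm.
Qed.

Lemma KL_ge_TC (q : forall i, T i -> R) (q0 : forall i a, 0 <= q i a)
  (q1 : forall i, \sum_a q i a = 1)
  (hpos : forall c, 0 < P c -> 0 < \prod_i q i (c i)) :
  \sum_c P c * ln (P c / \prod_i Pm i (c i)) <=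
  \sum_c P c * (ln (P c) - ln (\prod_i q i (c i))).
Proof.
have qpos c i : 0 < P c -> 0 < q i (c i).
  move=> pc; have := hpos c pc; have := q0 i (c i).
  rewrite le_eqVlt => /orP[/eqP e|//].
  by rewrite (bigD1 i) //= -e mul0r ltxx.
have Pmpos c i : 0 < P c -> 0 < Pm i (c i).
  by move=> pc; exact: lt_le_trans pc (Pm_ge c i).
have term c : P c * (ln (P c) - ln (\prod_i q i (c i))) - P c * ln (P c / \prod_i Pm i (c i))
    = \sum_i P c * (ln (Pm i (c i)) - ln (q i (c i))).
  have [->|pn] := eqVneq (P c) 0.
    by rewrite !mul0r subrr big1 // => ? _; rewrite mul0r.
  have pc : 0 < P c by rewrite lt_neqAle eq_sym pn P0.
  rewrite ln_div ?posrE //; last exact: prod_Pm_pos.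
  rewrite !ln_prod; [| by move=> i; apply: Pmpos | by move=> i; apply: qpos].
  by rewrite -mulr_sumr sumrB; ring.
rewrite -subr_ge0 -sumrB (eq_bigr _ (fun c _ => term c)) exchange_big /=.
apply: sumr_ge0 => i _.
have -> := sum_Pm_f i (fun a => ln (Pm i a) - ln (q i a)).
have : \sum_a (Pm i a - q i a) <= \sum_a Pm i a * (ln (Pm i a) - ln (q i a)).
  apply: ler_sum => a _; apply: gibbs_term => //; first exact: Pm_ge0.
  by move=> /Pm_pos [c [<- pc]]; exact: qpos.
by rewrite sumrB sum_Pm q1 subrr.
Qed.

End RealPart.

Section IntPart.
Local Open Scope ereal_scope.

Lemma ereal_aux (R : realType) (pp bi nn aa : \bar R) : pp \is a fin_num ->
  aa \is a fin_num -> 0 <= bi -> 0 <= nn -> pp + bi = aa + nn -> pp - nn = aa - bi.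
Proof.
move: pp aa => [p| |] // [a| |] // _ _.
case: bi => [b| |] //; case: nn => [n| |] // _ _ //=.
move=> [] h; congr EFin; lra.
Qed.

Lemma integral_subE d (X : measurableType d) (R : realType)
  (mu : {measure set X -> \bar R}) (a : X -> R) (B : X -> \bar R) :
  measurable_fun setT a -> (forall x, (0 <= a x)%R) ->
  \int[mu]_x (a x)%:E \is a fin_num ->
  measurable_fun setT B -> (forall x, 0 <= B x) ->
  \int[mu]_x ((a x)%:E - B x) = \int[mu]_x (a x)%:E - \int[mu]_x B x.
Proof.
move=> ma a0 afin mB B0.
have mA : measurable_fun setT (fun x => (a x)%:E) by exact/measurable_EFinP.
set F := fun x => (a x)%:E - B x.
have mF : measurable_fun setT F by exact: emeasurable_funB.
have key x : F^\+ x + B x = (a x)%:E + F^\- x.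
  rewrite funeposE funenegE /F.
  have := B0 x; case: (B x) => [b| |] // b0.
    rewrite lee_fin in b0.
    rewrite -EFinB -EFinN -!EFin_max -!EFinD; congr EFin.
    case: (lerP (a x - b) 0) => h1; case: (lerP (- (a x - b)) 0) => h2; lra.
  have e1 : (a x)%:E - +oo = -oo by [].
  by rewrite e1 /= maxNye maxye addey // addey.
have E : \int[mu]_x (F^\+ x + B x) = \int[mu]_x ((a x)%:E + F^\- x).
  by apply: eq_integral => x _; exact: key.
have mFp : measurable_fun setT F^\+ by exact: measurable_funepos.
have mFn : measurable_fun setT F^\- by exact: measurable_funeneg.
have Fp0 : forall x, [set: X] x -> 0 <= F^\+ x by move=> x _; exact: funepos_ge0.
have Fn0 : forall x, [set: X] x -> 0 <= F^\- x by move=> x _; exact: funeneg_ge0.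
have B0' : forall x, [set: X] x -> 0 <= B x by move=> x _; exact: B0.
have A0' : forall x, [set: X] x -> 0 <= (a x)%:E by move=> x _; rewrite lee_fin.
rewrite ge0_integralD // in E.
rewrite ge0_integralD // in E.
rewrite integralE; apply: ereal_aux E => //.
- have h1 : 0 <= \int[mu]_x F^\+ x by apply: integral_ge0.
  have h2 : \int[mu]_x F^\+ x <= \int[mu]_x (a x)%:E.
    apply: ge0_le_integral => //.
    move=> x _; rewrite funeposE ge_max lee_fin a0 andbT /F.
    by have := leeB (lexx ((a x)%:E)) (B0 x); rewrite sube0.
  by rewrite ge0_fin_numE // (le_lt_trans h2) // ltey_eq afin.
- exact: integral_ge0.
- exact: integral_ge0.
Qed.

End IntPart.

Lemma measurable_inv_nonneg d (X : measurableType d) (R : realType) (f : X -> R) :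
  measurable_fun setT f -> (forall x, 0 <= f x) ->
  measurable_fun setT (fun x => (f x)^-1).
Proof.
move=> mf f0.
have -> : (fun x => (f x)^-1) =
    (fun x => if f x <= 0 then 0 else expR (- ln (f x))).
  apply/funext => x; case: ifPn => h.
    have -> : f x = 0 by apply/le_anti; rewrite h f0.
    by rewrite invr0.
  rewrite -ltNge in h.
  by rewrite expRN lnK // posrE.
apply: measurable_fun_ifT.
- by apply: measurable_fun_ler => //; exact: measurable_cst.
- exact: measurable_cst.
- apply: measurableT_comp; first exact: measurable_expR.
  apply: measurableT_comp => //; apply: measurableT_comp => //.
Qed.


Lemma oppeD_ge0 (R : realType) (x y : \bar R) : (0 <= x)%E -> (0 <= y)%E ->
  (- (x + y) = - x - y)%E.
Proof. by move: x y => [x| |] [y| |] //= _ _; rewrite opprD. Qed.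

Lemma sumeN_ge0 (R : realType) (I : finType) (v : I -> \bar R) :
  (forall i, 0 <= v i)%E -> (\sum_i - v i = - \sum_i v i)%E.
Proof.
move=> v0; elim: (index_enum I) => [|h t IH].
  by rewrite !big_nil; exact/esym/oppe0.
rewrite !big_cons IH oppeD_ge0 //.
by apply: sume_ge0 => i _.
Qed.

Lemma sumeBr (R : realType) (I : finType) (a : I -> R) (v : I -> \bar R) :
  (forall i, 0 <= v i)%E ->
  (\sum_i ((a i)%:E - v i) = (\sum_i a i)%:E - \sum_i v i)%E.
Proof.
by move=> v0; rewrite big_split /= sumEFin sumeN_ge0.
Qed.

Lemma final_alg (R : realType) (A SU SV E : \bar R) :
  A \is a fin_num -> SU \is a fin_num -> (0 <= SU)%E -> (0 <= SV)%E -> (0 <= E)%E ->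
  (SU + E <= SV)%E -> (E <= (A - SU) - (A - SV))%E.
Proof.
move: A SU => [a| |] // [u| |] // _ _ u0.
case: SV => [s| |] // s0.
- case: E => [e| |] // e0 //=.
  rewrite !lee_fin => h; lra.
- by move=> _ _; rewrite /= leey.
Qed.


Lemma sum_fin (R : realType) (I : finType) (u : I -> \bar R) :
  (forall i, u i \is a fin_num) -> (\sum_i u i)%E \is a fin_num.
Proof.
move=> h; apply: (big_ind (fun x : \bar R => x \is a fin_num)) => //.
by move=> x y hx hy; rewrite fin_numD hx hy.
Qed.

Section Main.
Variables (R : realType) (L : nat) (T : 'I_L -> finType).
Variable p : forall i : 'I_L, T i -> R.
Hypothesis hp : forall i, is_pmf (p i).
Variables (d : measure_display) (X : measurableType d).
Variable mu : {measure set X -> \bar R}.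
Variable G : config T -> X -> R.
Hypothesis mG : forall c, measurable_fun setT (G c).
Hypothesis G0 : forall c x, 0 <= G c x.
Hypothesis G1 : forall c, (\int[mu]_x (G c x)%:E = 1)%E.
Variable q : forall i : 'I_L, X -> T i -> R.
Hypothesis mq : forall i a, measurable_fun setT (fun x => q i x a).
Hypothesis hq : forall i x, is_pmf (q i x).

Local Notation jp := (joint p).
Local Notation m := (marg p G).
Local Notation po := (post p G).

Lemma jp_ge0 c : 0 <= jp c.
Proof. by apply: prodr_ge0 => i _; case: (hp i). Qed.

Lemma p_le1 i a : p i a <= 1.
Proof.
case: (hp i) => h0 <-; rewrite (bigD1 a) //= lerDl.
by apply: sumr_ge0 => ? _.
Qed.

Lemma jp_le1 c : jp c <= 1.
Proof.
by apply: prodr_ile1 => i _; apply/andP; split; [case: (hp i)|exact: p_le1].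
Qed.

Lemma m_ge0 x : 0 <= m x.
Proof. by apply: sumr_ge0 => c _; apply: mulr_ge0; [exact: jp_ge0|exact: G0]. Qed.

Lemma jpG_le c x : jp c * G c x <= m x.
Proof.
rewrite /marg (bigD1 c) //= lerDl; apply: sumr_ge0 => c' _.
by apply: mulr_ge0; [exact: jp_ge0|exact: G0].
Qed.

Lemma po_ge0 c x : 0 <= po c x.
Proof.
apply: divr_ge0; last exact: m_ge0.
by apply: mulr_ge0; [exact: jp_ge0|exact: G0].
Qed.

Lemma po_le1 c x : po c x <= 1.
Proof.
rewrite /post; have [m0|mp] := eqVneq (m x) 0; first by rewrite m0 invr0 mulr0.
have mp' : 0 < m x by rewrite lt_neqAle eq_sym mp m_ge0.
by rewrite ler_pdivrMr // mul1r jpG_le.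
Qed.

Lemma m0_jpG x c : m x = 0 -> jp c * G c x = 0.
Proof.
move=> m0; apply/le_anti; rewrite -m0 jpG_le /= m0.
by apply: mulr_ge0; [exact: jp_ge0|exact: G0].
Qed.

Lemma jpG_eq c x : jp c * G c x = m x * po c x.
Proof.
rewrite /post; have [m0|mp] := eqVneq (m x) 0; first by rewrite m0 mul0r m0_jpG.
by rewrite mulrCA divff // mulr1.
Qed.

Lemma sum_po x : 0 < m x -> \sum_c po c x = 1.
Proof.
move=> mp; rewrite /post -mulr_suml; exact: (divff (lt0r_neq0 mp)).
Qed.

Lemma mm : measurable_fun setT m.
Proof.
apply: measurable_sum => c; apply: measurable_funM => //; exact: measurable_cst.
Qed.

Lemma mpo c : measurable_fun setT (po c).
Proof.
apply: measurable_funM; first by apply: measurable_funM => //; exact: measurable_cst.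
by apply: measurable_inv_nonneg; [exact: mm|exact: m_ge0].
Qed.

Lemma mTC : measurable_fun setT (TC p G).
Proof.
apply: measurable_sum => c; apply: measurable_funM; first exact: mpo.
apply: measurableT_comp; first exact: measurable_ln.
apply: measurable_funM; first exact: mpo.
apply: measurable_inv_nonneg.
  apply: measurable_prod => i _; rewrite /post_i.
  under eq_fun do rewrite big_mkcond /=.
  apply: measurable_sum => c'; case: (c' i == c i); [exact: mpo|exact: measurable_cst].
move=> x; apply: prodr_ge0 => i _; apply: sumr_ge0 => c' _; exact: po_ge0.
Qed.

Lemma TC_ge0 x : 0 <= TC p G x.
Proof.
have [m0|mp] := eqVneq (m x) 0.
  rewrite /TC big1 // => c _.
  by rewrite {1}/post m0 invr0 mulr0 mul0r.
have mp' : 0 < m x by rewrite lt_neqAle eq_sym mp m_ge0.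
move: (@TC_ge0_gen R L T (fun c => po c x) (fun c => po_ge0 c x) (sum_po x mp')).
by rewrite /Pm /TC /post_i.
Qed.


Definition kc c := - ln (jp c).
Definition U c x := - (G c x * ln (po c x)).
Definition V c x : \bar R := ((G c x)%:E * - elog (Qjoint q c x))%E.

Lemma kc_ge0 c : 0 <= kc c.
Proof. by rewrite /kc oppr_ge0 ln_le0 // jp_le1. Qed.

Lemma U_ge0 c x : 0 <= U c x.
Proof.
rewrite /U oppr_ge0; apply: mulr_ge0_le0; first exact: G0.
by rewrite ln_le0 // po_le1.
Qed.

Lemma q_le1 i x a : q i x a <= 1.
Proof.
case: (hq i x) => h0 <-; rewrite (bigD1 a) //= lerDl.
by apply: sumr_ge0 => ? _.
Qed.

Lemma Qj_ge0 c x : 0 <= Qjoint q c x.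
Proof. by apply: prodr_ge0 => i _; case: (hq i x). Qed.

Lemma Qj_le1 c x : Qjoint q c x <= 1.
Proof.
by apply: prodr_ile1 => i _; apply/andP; split; [case: (hq i x)|exact: q_le1].
Qed.

Lemma elog_Qj_le0 c x : (elog (Qjoint q c x) <= 0)%E.
Proof.
rewrite /elog; case: ifP => // _; rewrite lee_fin ln_le0 //; exact: Qj_le1.
Qed.

Lemma V_ge0 c x : (0 <= V c x)%E.
Proof.
apply: mule_ge0; first by rewrite lee_fin.
by rewrite oppe_ge0 elog_Qj_le0.
Qed.

Lemma MI_pt c x : 0 < jp c ->
  G c x * ln (po c x / jp c) = kc c * G c x - U c x.
Proof.
move=> jpp; rewrite /U /kc.
have [->|Gn] := eqVneq (G c x) 0; first by rewrite !mul0r mulr0 oppr0 subr0.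
have Gp : 0 < G c x by rewrite lt_neqAle eq_sym Gn G0.
have mp : 0 < m x by apply: lt_le_trans (jpG_le c x); exact: mulr_gt0.
have pp : 0 < po c x by apply: divr_gt0 => //; exact: mulr_gt0.
rewrite ln_div ?posrE //; ring.
Qed.

Lemma Lin_pt c x : 0 < jp c ->
  ((G c x)%:E * (elog (Qjoint q c x) - (ln (jp c))%:E) = (kc c * G c x)%:E - V c x)%E.
Proof.
move=> jpp; rewrite /V /elog /kc; case: ifP => hQ.
  rewrite -?EFinN -?EFinB -?EFinM -?EFinB; congr EFin; ring.
have [->|Gn] := eqVneq (G c x) 0; first by rewrite mulr0 !mul0e sube0.
have Gp : 0 < G c x by rewrite lt_neqAle eq_sym Gn G0.
have e1 : (-oo - (ln (jp c))%:E = -oo)%E by [].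
have e2 : (- -oo = +oo :> \bar R)%E by [].
by rewrite e1 e2 gt0_muleNy ?lte_fin // gt0_muley ?lte_fin.
Qed.


Lemma key_pt x : (\sum_c (jp c)%:E * (U c x)%:E + (m x * TC p G x)%:E <=
  \sum_c (jp c)%:E * V c x)%E.
Proof.
have rhs0 : (0 <= \sum_c (jp c)%:E * V c x)%E.
  by apply: sume_ge0 => c _; apply: mule_ge0; [rewrite lee_fin jp_ge0|exact: V_ge0].
have [m0|mn] := eqVneq (m x) 0.
  rewrite big1 ?add0e; last first.
    move=> c _; rewrite -EFinM /U mulrN mulrA m0_jpG // mul0r oppr0 //.
  by rewrite m0 mul0r.
have mp : 0 < m x by rewrite lt_neqAle eq_sym mn m_ge0.
have eL c : ((jp c)%:E * (U c x)%:E = (m x * - (po c x * ln (po c x)))%:E)%E.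
  by rewrite -EFinM /U; congr (_%:E); rewrite !mulrN mulrA jpG_eq -mulrA.
have eR c : ((jp c)%:E * V c x = (m x * po c x)%:E * - elog (Qjoint q c x))%E.
  by rewrite /V muleA -EFinM jpG_eq.
have tR0 c : (0 <= (m x * po c x)%:E * - elog (Qjoint q c x))%E.
  by rewrite -eR; apply: mule_ge0; [rewrite lee_fin jp_ge0|exact: V_ge0].
under eq_bigr do rewrite eL.
under [X in (_ <= X)%E]eq_bigr do rewrite eR.
case: (pselect (exists c, 0 < po c x /\ ~ (0 < Qjoint q c x))).
  move=> [c [pc nQ]].
  have r0 : (0 <= \sum_(c' | c' != c) (m x * po c' x)%:E * - elog (Qjoint q c' x))%E.
    by apply: sume_ge0 => c' _; exact: tR0.
  rewrite [X in (_ <= X)%E](bigD1 c) //= {1}/elog.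
  have -> : (0 < Qjoint q c x) = false by apply/negP.
  have e2 : (- -oo = +oo :> \bar R)%E by [].
  rewrite e2 gt0_muley; last by rewrite lte_fin; exact: mulr_gt0.
  have ne : (\sum_(c' | c' != c) (m x * po c' x)%:E * - elog (Qjoint q c' x))%E != -oo%E.
    by apply/negP => /eqP h; move: r0; rewrite h.
  by rewrite (addye ne) leey.
move=> hn.
have hpos c : 0 < po c x -> 0 < Qjoint q c x.
  move=> pc; case: (boolP (0 < Qjoint q c x)) => // /negP h.
  by exfalso; apply: hn; exists c.
have eR2 c : ((m x * po c x)%:E * - elog (Qjoint q c x) =
    (m x * (po c x * - ln (Qjoint q c x)))%:E)%E.
  have [->|pn] := eqVneq (po c x) 0; first by rewrite mulr0 !mul0r mulr0 mul0e.
  have pc : 0 < po c x by rewrite lt_neqAle eq_sym pn po_ge0.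
  by rewrite /elog hpos // -EFinN -EFinM mulrA.
under [X in (_ <= X)%E]eq_bigr do rewrite eR2.
rewrite !sumEFin -EFinD lee_fin.
rewrite -!mulr_sumr -mulrDr ler_wpM2l ?m_ge0 //.
have KL := @KL_ge_TC R L T (fun c => po c x) (fun c => po_ge0 c x) (sum_po x mp)
  (fun i a => q i x a) (fun i a => (hq i x).1 a) (fun i => (hq i x).2) hpos.
have KL2 : TC p G x <= \sum_c po c x * (ln (po c x) - ln (Qjoint q c x)) := KL.
rewrite (eq_bigr (fun c => po c x * ln (po c x) - po c x * ln (Qjoint q c x))) in KL2;
  last by move=> c _; rewrite mulrBr.
rewrite sumrB in KL2.
rewrite [X in _ <= X](eq_bigr (fun c => - (po c x * ln (Qjoint q c x))));
  last by move=> c _; rewrite mulrN.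
rewrite !sumrN; lra.
Qed.


Lemma mU c : measurable_fun setT (U c).
Proof.
apply: measurable_funN; apply: measurable_funM => //.
by apply: measurableT_comp; [exact: measurable_ln|exact: mpo].
Qed.

Lemma mQj c : measurable_fun setT (Qjoint q c).
Proof. by apply: measurable_prod => i _; exact: mq. Qed.

Lemma mV c : measurable_fun setT (V c).
Proof.
apply: emeasurable_funM; first exact/measurable_EFinP.
have -> : (fun x => - elog (Qjoint q c x))%E =
    (fun x => if 0 < Qjoint q c x then (- ln (Qjoint q c x))%:E else +oo%E).
  by apply/funext => x; rewrite /elog; case: ifP.
apply: measurable_fun_ifT.
- by apply: measurable_fun_ltr; [exact: measurable_cst|exact: mQj].
- apply/measurable_EFinP; apply: measurable_funN.
  by apply: measurableT_comp; [exact: measurable_ln|exact: mQj].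
- exact: measurable_cst.
Qed.

Lemma int_kG c : (\int[mu]_x (kc c * G c x)%:E = (kc c)%:E)%E.
Proof.
under eq_integral do rewrite EFinM.
rewrite ge0_integralZl_EFin //; first by rewrite G1 mule1.
- by move=> x _; rewrite lee_fin.
- exact/measurable_EFinP.
- exact: kc_ge0.
Qed.

Lemma MIc c : 0 < jp c ->
  (\int[mu]_x (G c x * ln (po c x / jp c))%:E =
   (kc c)%:E - \int[mu]_x (U c x)%:E)%E.
Proof.
move=> jpp.
rewrite (eq_integral (fun x => (kc c * G c x)%:E - (U c x)%:E)%E); last first.
  by move=> x _; rewrite MI_pt // EFinB.
rewrite integral_subE.
- by rewrite int_kG.
- by apply: measurable_funM => //; exact: measurable_cst.
- by move=> x; apply: mulr_ge0; [exact: kc_ge0|exact: G0].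
- by rewrite int_kG.
- exact/measurable_EFinP/mU.
- by move=> x; rewrite lee_fin U_ge0.
Qed.

Lemma Linc c : 0 < jp c ->
  (\int[mu]_x ((G c x)%:E * (elog (Qjoint q c x) - (ln (jp c))%:E)) =
   (kc c)%:E - \int[mu]_x V c x)%E.
Proof.
move=> jpp.
rewrite (eq_integral (fun x => (kc c * G c x)%:E - V c x)%E); last first.
  by move=> x _; rewrite Lin_pt.
rewrite integral_subE.
- by rewrite int_kG.
- by apply: measurable_funM => //; exact: measurable_cst.
- by move=> x; apply: mulr_ge0; [exact: kc_ge0|exact: G0].
- by rewrite int_kG.
- exact: mV.
- by move=> x; exact: V_ge0.
Qed.


Lemma U_le c x : 0 < jp c -> U c x <= (jp c)^-1 * m x.
Proof.
move=> jpp.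
have [G0'|Gn] := eqVneq (G c x) 0.
  rewrite /U G0' mul0r oppr0; apply: mulr_ge0; [by rewrite invr_ge0 ltW|exact: m_ge0].
have Gp : 0 < G c x by rewrite lt_neqAle eq_sym Gn G0.
have mp : 0 < m x by apply: lt_le_trans (jpG_le c x); exact: mulr_gt0.
have pp : 0 < po c x by apply: divr_gt0 => //; exact: mulr_gt0.
have h : ln (po c x)^-1 <= (po c x)^-1 - 1 by apply: ln_le_sub1; rewrite invr_gt0.
rewrite lnV ?posrE // in h.
have e : G c x * (po c x)^-1 = (jp c)^-1 * m x.
  rewrite /post; field; rewrite ?gt_eqF //.
rewrite -e /U -mulrN -subr_ge0 -mulrBr; apply: mulr_ge0; first exact: ltW.
have : 0 <= (po c x)^-1 by rewrite invr_ge0 ltW.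
lra.
Qed.

Lemma int_rG c r : 0 <= r -> (\int[mu]_x (r * G c x)%:E = r%:E)%E.
Proof.
move=> r0; under eq_integral do rewrite EFinM.
rewrite ge0_integralZl_EFin //; first by rewrite G1 mule1.
- by move=> x _; rewrite lee_fin.
- exact/measurable_EFinP.
Qed.

Lemma int_m : (\int[mu]_x (m x)%:E = (\sum_c jp c)%:E)%E.
Proof.
under eq_integral do rewrite /marg -sumEFin.
rewrite ge0_integral_sum //.
- rewrite -sumEFin; apply: eq_bigr => c _; apply: int_rG; exact: jp_ge0.
- move=> c; apply/measurable_EFinP; apply: measurable_funM => //; exact: measurable_cst.
- by move=> c x _; rewrite lee_fin; apply: mulr_ge0; [exact: jp_ge0|exact: G0].
Qed.

Lemma U_fin c : 0 < jp c -> (\int[mu]_x (U c x)%:E)%E \is a fin_num.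
Proof.
move=> jpp.
have h0 : (0 <= \int[mu]_x (U c x)%:E)%E.
  by apply: integral_ge0 => x _; rewrite lee_fin U_ge0.
have h1 : (\int[mu]_x (U c x)%:E <= \int[mu]_x ((jp c)^-1 * m x)%:E)%E.
  apply: ge0_le_integral => //.
  - by move=> x _; rewrite lee_fin U_ge0.
  - exact/measurable_EFinP/mU.
  - apply/measurable_EFinP; apply: measurable_funM; [exact: measurable_cst|exact: mm].
  - by move=> x _; rewrite lee_fin U_le.
have h2 : (\int[mu]_x ((jp c)^-1 * m x)%:E = ((jp c)^-1 * \sum_c jp c)%:E)%E.
  under eq_integral do rewrite EFinM.
  rewrite ge0_integralZl_EFin //; first by rewrite int_m.
  - by move=> x _; rewrite lee_fin m_ge0.
  - exact/measurable_EFinP/mm.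
  - by rewrite invr_ge0 ltW.
rewrite ge0_fin_numE // (le_lt_trans h1) // h2; exact: ltey.
Qed.


Lemma main_ineq : (0 <= ExpTC p mu G /\ ExpTC p mu G <= MI p mu G - Linfo p mu G q)%E.
Proof.
pose u c := ((jp c)%:E * \int[mu]_x (U c x)%:E)%E.
pose v c := ((jp c)%:E * \int[mu]_x V c x)%E.
have u0 c : (0 <= u c)%E.
  apply: mule_ge0; first by rewrite lee_fin jp_ge0.
  by apply: integral_ge0 => x _; rewrite lee_fin U_ge0.
have v0 c : (0 <= v c)%E.
  apply: mule_ge0; first by rewrite lee_fin jp_ge0.
  by apply: integral_ge0 => x _; exact: V_ge0.
have ufin c : u c \is a fin_num.
  have [j0|jn] := eqVneq (jp c) 0; first by rewrite /u j0 mul0e.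
  have jpp : 0 < jp c by rewrite lt_neqAle eq_sym jn jp_ge0.
  by rewrite /u fin_numM // U_fin.
have E0 : (0 <= ExpTC p mu G)%E.
  apply: integral_ge0 => x _; rewrite lee_fin.
  by apply: mulr_ge0; [exact: m_ge0|exact: TC_ge0].
split => //.
have hMI : MI p mu G = (\sum_c ((jp c * kc c)%:E - u c))%E.
  rewrite /MI; apply: eq_bigr => c _.
  have [j0|jn] := eqVneq (jp c) 0; first by rewrite /u j0 !mul0e mul0r sube0.
  have jpp : 0 < jp c by rewrite lt_neqAle eq_sym jn jp_ge0.
  by rewrite MIc // muleBr ?EFinM // fin_num_adde_defr.
have hL : Linfo p mu G q = (\sum_c ((jp c * kc c)%:E - v c))%E.
  rewrite /Linfo; apply: eq_bigr => c _.
  have [j0|jn] := eqVneq (jp c) 0; first by rewrite /v j0 !mul0e mul0r sube0.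
  have jpp : 0 < jp c by rewrite lt_neqAle eq_sym jn jp_ge0.
  by rewrite Linc // muleBr ?EFinM // fin_num_adde_defr.
rewrite hMI hL !sumeBr //.
apply: final_alg => //; [exact: sum_fin|exact: sume_ge0|exact: sume_ge0|].
have mUs c : measurable_fun setT (fun x => (jp c)%:E * (U c x)%:E)%E.
  by apply: emeasurable_funM; [exact: measurable_cst|exact/measurable_EFinP/mU].
have mVs c : measurable_fun setT (fun x => (jp c)%:E * V c x)%E.
  by apply: emeasurable_funM; [exact: measurable_cst|exact: mV].
have Us0 c : forall x, [set: X] x -> (0 <= (jp c)%:E * (U c x)%:E)%E.
  by move=> x _; apply: mule_ge0; rewrite lee_fin ?jp_ge0 ?U_ge0.
have Vs0 c : forall x, [set: X] x -> (0 <= (jp c)%:E * V c x)%E.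
  by move=> x _; apply: mule_ge0; [rewrite lee_fin jp_ge0|exact: V_ge0].
have mT : measurable_fun setT (fun x => (m x * TC p G x)%:E).
  by apply/measurable_EFinP; apply: measurable_funM; [exact: mm|exact: mTC].
have T0 : forall x, [set: X] x -> (0 <= (m x * TC p G x)%:E)%E.
  by move=> x _; rewrite lee_fin; apply: mulr_ge0; [exact: m_ge0|exact: TC_ge0].
have mSU : measurable_fun setT (fun x => \sum_c (jp c)%:E * (U c x)%:E)%E.
  by apply: emeasurable_sum => c; exact: mUs.
have SU0 : forall x, [set: X] x -> (0 <= \sum_c (jp c)%:E * (U c x)%:E)%E.
  by move=> x _; apply: sume_ge0 => c _; exact: Us0.
have eq1 : (\int[mu]_x (\sum_c (jp c)%:E * (U c x)%:E + (m x * TC p G x)%:E) =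
    \sum_c u c + ExpTC p mu G)%E.
  rewrite ge0_integralD // ge0_integral_sum //; congr (_ + _).
  apply: eq_bigr => c _; rewrite ge0_integralZl_EFin //; last exact: jp_ge0.
  - by move=> x _; rewrite lee_fin U_ge0.
  - exact/measurable_EFinP/mU.
have eq2 : (\int[mu]_x (\sum_c (jp c)%:E * V c x) = \sum_c v c)%E.
  rewrite ge0_integral_sum //.
  apply: eq_bigr => c _; rewrite ge0_integralZl_EFin //; last exact: jp_ge0.
  - by move=> x _; exact: V_ge0.
  - exact: mV.
rewrite -eq1 -eq2; apply: ge0_le_integral => //.
- by move=> x _; apply: adde_ge0; [exact: SU0|exact: T0].
- exact: emeasurable_funD.
- by apply: emeasurable_sum => c; exact: mVs.
- by move=> x _; exact: key_pt.
Qed.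

End Main.

Theorem lemma1 (R : realType) (L : nat) (T : 'I_L -> finType)
  (p : forall i : 'I_L, T i -> R)
  (d : measure_display) (X : measurableType d) (mu : {measure set X -> \bar R})
  (g : nat -> config T -> X -> R)
  (Q : nat -> forall i : 'I_L, X -> T i -> R) :
  (forall i, is_pmf (p i)) ->
  (forall n c, measurable_fun setT (g n c)) ->
  (forall n c x, 0 <= g n c x) ->
  (forall n c, (\int[mu]_x (g n c x)%:E = 1)%E) ->
  (forall n i a, measurable_fun setT (fun x => Q n i x a)) ->
  (forall n i x, is_pmf (Q n i x)) ->
  (fun n => MI p mu (g n) - Linfo p mu (g n) (Q n))%E @ \oo --> 0%E ->
  (fun n => ExpTC p mu (g n)) @ \oo --> 0%E.
Proof.
move=> hp mg g0 g1 mq hq hcv.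
apply: (@squeeze_cvge _ _ _ _ (fun _ => 0%E) _
  (fun n => (MI p mu (g n) - Linfo p mu (g n) (Q n))%E)); last exact: hcv.
- apply: nearW => n.
  have [h1 h2] := @main_ineq R L T p hp d X mu (g n) (mg n) (g0 n) (g1 n) (Q n) (mq n) (hq n).
  by apply/andP; split.
- exact: cvg_cst.
Qed.
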